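(* Let $U,V\subseteq M$ be open, let $\Psi:U\to V$ be a diffeomorphism with $\Psi^*t=t$, and let $g$ be a slice-compatible Lorentzian metric on $V$ with shift $X$. For a tensor field $T$ on $V$ define $B=\mathcal S(T;X)$ and $\hat B=\mathcal S(\Psi^*T;\hat X)$, where $\hat X$ is the shift of the slice-compatible Lorentzian metric $\Psi^*g$. Then $\hat B=j_*\Psi^*B$. If additionally $\Psi$ is the identity on $\Sigma_{t_0}\cap U$ for some $t_0$, then on $\Sigma_{t_0}\cap U$ we have $\hat B=B$ and $\mathcal L_S\hat B=\mathcal L_SB$ for all spatial vector fields $S$.
   Context: $M=\Sigma\times I$, where $\Sigma\subseteq\mathbb R^n$ is open with coordinates $x^1,\dots,x^n$ and $I\subseteq\mathbb R$ is an open interval with coordinate $t$; $\Sigma_t=\Sigma\times\{t\}$; all fields smooth. A tensor is spatial if it vanishes whenever one of its arguments is $dt$ or $\partial_t$. The projection $j_*$: $j_*dt=0$, $j_*dx^i=dx^i$, $j_*\partial_t=0$, $j_*\partial_{x^i}=\partial_{x^i}$, $j_*T(\cdot,\dots,\cdot)=T(j_*\cdot,\dots,j_*\cdot)$. $\Psi^*$ acts on vectors by $\Psi^*Y=(\Psi^{-1})_*Y$. A Lorentzian metric $g$ is slice compatible if its restriction to each $\Sigma_t$ is Riemannian; its unit normal $\nu$ satisfies $\nu(dt)>0$, $g(\nu,\nu)=-1$, $j_*g(\nu,\cdot)=0$; writing $\partial_t=N\nu+X$ with $X$ spatial defines the shift $X$ (and lapse $N$). Decomposition of tensors: for a spatial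 vector field $X$, let $\mathcal P_X(a\partial_t+W)=aX+W$ ($W$ spatial) and $\mathcal P_X^*$ its adjoint on 1-forms, $(\mathcal P_X^*\omega)(Z)=\omega(\mathcal P_XZ)$. For a tensor $T$ of rank $k$, one obtains $2^k$ spatial tensors by choosing, for each slot taking a vector, either to insert $\partial_t-X$ or to precompose with $j_*$, and for each slot taking a covector, either to insert $dt$ or to precompose with $\mathcal P_X^*$ (e.g. $b\,dt+\eta\mapsto(b-\eta(X),\eta)$ and $a\partial_t+W\mapsto(a,W+aX)$). In a fixed order these form the tuple $\mathcal S(T;X)$. The operations $j_*$, $\Psi^*$ and $\mathcal L_S$ act on such tuples componentwise. *)

(* Defs.v *)
(* Everything is done in the global
   coordinate chart (x^1,...,x^n,t) of M = Sigma x I, an open subset of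
   R^(n+1).  Points are row vectors 'rV[R]_n.+1; the coordinate t is the
   last one (index ord_max). *)
From HB Require Import structures.
From mathcomp Require Import all_boot all_order all_algebra.
From mathcomp Require Import all_classical all_reals all_analysis.
Set Implicit Arguments. Unset Strict Implicit. Unset Printing Implicit Defensive.
Import Order.TTheory GRing.Theory Num.Theory.
Import numFieldNormedType.Exports.
Local Open Scope classical_set_scope.
Local Open Scope ring_scope.

Section Defs.
Variable R : realType.
Variable n : nat.
Local Notation pt := 'rV[R]_n.+1.

Definition tidx : 'I_n.+1 := ord_max.
Definition tcoord (p : pt) : R := p ord0 tidx.
Definition spat (p : pt) : 'rV[R]_n := \row_(i < n) p ord0 (widen_ord (leqnSn n) i).
Definition Mset (Sigma : set 'rV[R]_n) (a b : \bar R) : set pt :=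
  [set p | Sigma (spat p) /\ (a < (tcoord p)%:E < b)%E].

Definition ebasis (i : 'I_n.+1) : pt := delta_mx 0 i.
Definition pd (i : 'I_n.+1) (f : pt -> R) (x : pt) : R := 'D_(ebasis i) f x.

Fixpoint Ck (k : nat) (U : set pt) (f : pt -> R) : Prop :=
  match k with
  | 0 => forall x, U x -> {for x, continuous f}
  | k.+1 => (forall x, U x -> differentiable f x) /\ forall i, Ck k U (pd i f)
  end.
Definition smooth_on (U : set pt) (f : pt -> R) : Prop := forall k, Ck k U f.

(* A tensor field with slot set S (a finite type), given by its components
   T p f = T_p(e_{f i})_i, where e_a is d/dx^a in a vector slot and dx^a in a
   covector slot.  The slot kinds are given by kind : S -> bool
   (true = slot taking a vector, false = slot taking a covector). *)
Definition tfield (S : finType) := pt -> {ffun S -> 'I_n.+1} -> R.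

Definition tsmooth (S : finType) (U : set pt) (T : tfield S) : Prop :=
  forall f, smooth_on U (fun p => T p f).

Definition vsmooth (U : set pt) (Y : pt -> pt) : Prop :=
  forall a, smooth_on U (fun p => Y p ord0 a).

Definition jstar (S : finType) (T : tfield S) : tfield S :=
  fun p f => T p f * \prod_(i : S) (f i != tidx)%:R.

Definition jac (Psi : pt -> pt) (p : pt) : 'M[R]_n.+1 :=
  \matrix_(b, a) pd a (fun q => Psi q ord0 b) p.

(* pullback: (Psi^* T)_p(Y.., w..) = T_{Psi p}(Psi_* Y.., (Psi^-1)^* w..) *)
Definition pullback (S : finType) (kind : S -> bool) (Psi : pt -> pt)
  (T : tfield S) : tfield S :=
  fun p f => \sum_(g : {ffun S -> 'I_n.+1}) T (Psi p) g *
     \prod_(i : S) (if kind i then jac Psi p (g i) (f i)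
                    else invmx (jac Psi p) (f i) (g i)).

Definition fupd (S : finType) (f : {ffun S -> 'I_n.+1}) (i : S) (c : 'I_n.+1)
  : {ffun S -> 'I_n.+1} := [ffun j => if j == i then c else f j].

Definition lie (S : finType) (kind : S -> bool) (Y : pt -> pt) (T : tfield S)
  : tfield S :=
  fun p f => \sum_(c < n.+1) Y p ord0 c * pd c (fun q => T q f) p
   + \sum_(i : S) \sum_(c < n.+1)
       (if kind i then pd (f i) (fun q => Y q ord0 c) p
        else - pd c (fun q => Y q ord0 (f i)) p) * T p (fupd f i c).

(* The components are indexed by c : {ffun S -> bool}
   (c i = true: insert d_t - X (vector slot) resp. dt (covector slot) in slot
   i; c i = false: precompose slot i with j_* resp. P_X^* ).  The component
   indexed by c is a tensor field whose slots are the non-inserted ones. *)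
Definition subkind (S : finType) (kind : S -> bool) (c : {ffun S -> bool})
  : {i : S | ~~ c i} -> bool := fun j => kind (val j).

Definition dweight (S : finType) (kind : S -> bool) (c : {ffun S -> bool})
  (X : pt -> pt) (p : pt) (f : {ffun {i : S | ~~ c i} -> 'I_n.+1})
  (i : S) (b : 'I_n.+1) : R :=
  match (insub i : option {i : S | ~~ c i}) with
  | Some j => let a := f j in
      if kind i then (a != tidx)%:R * (b == a)%:R            (* j_* d_a *)
      else (a != tidx)%:R * ((b == a)%:R + (b == tidx)%:R * X p ord0 a)
                                                           (* P_X^* dx^a *)
  | None => if kind i then (b == tidx)%:R - X p ord0 b      (* d_t - X *)
            else (b == tidx)%:R                             (* dt *)
  end.

Definition decomp (S : finType) (kind : S -> bool) (T : tfield S)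
  (X : pt -> pt) : forall c : {ffun S -> bool}, tfield {i : S | ~~ c i} :=
  fun c p f => \sum_(g : {ffun S -> 'I_n.+1})
                 T p g * \prod_(i : S) @dweight S kind c X p f i (g i).

Definition vkind2 : 'I_2 -> bool := fun _ => true.
Definition gmat (g : tfield 'I_2) (p : pt) : 'M[R]_n.+1 :=
  \matrix_(a, b) g p [ffun i : 'I_2 => if i == ord0 then a else b].
Definition gform (g : tfield 'I_2) (p : pt) (u v : pt) : R :=
  (u *m gmat g p *m v^T) ord0 ord0.

Definition lorentzian_at (g : tfield 'I_2) (p : pt) : Prop :=
  (gmat g p)^T = gmat g p /\
  exists P : 'M[R]_n.+1, P \in unitmx /\
    P^T *m gmat g p *m P = diag_mx (\row_i (if i == tidx then -1 else 1)).

Definition slice_compatible (V : set pt) (g : tfield 'I_2) : Prop :=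
  tsmooth V g /\
  forall p, V p -> lorentzian_at g p /\
    (forall v : pt, v ord0 tidx = 0 -> v != 0 -> 0 < gform g p v v).

Definition is_shift (g : tfield 'I_2) (p : pt) (x : pt) : Prop :=
  x ord0 tidx = 0 /\
  exists (N : R) (nu : pt),
    0 < nu ord0 tidx /\ gform g p nu nu = -1 /\
    (forall w : pt, w ord0 tidx = 0 -> gform g p nu w = 0) /\
    ebasis tidx = N *: nu + x.

Definition diffeo (U V : set pt) (Psi : pt -> pt) : Prop :=
  (forall p, U p -> V (Psi p)) /\ vsmooth U Psi /\
  exists Phi : pt -> pt, (forall q, V q -> U (Phi q)) /\ vsmooth V Phi /\
    (forall p, U p -> Phi (Psi p) = p) /\ (forall q, V q -> Psi (Phi q) = q).

End Defs.
Arguments decomp {R n S} kind T X c _ _.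
Arguments subkind {S} kind c _.
Arguments dweight {R n S} kind c X p f i b.

(* Main.v *)
Require Import Defs.
From HB Require Import structures.
From mathcomp Require Import all_boot all_order all_algebra.
From mathcomp Require Import all_classical all_reals all_analysis.
From mathcomp Require Import ring lra.
Import Order.TTheory GRing.Theory Num.Theory.
Import numFieldNormedType.Exports.
Local Open Scope classical_set_scope.
Local Open Scope ring_scope.
Set Implicit Arguments. Unset Strict Implicit. Unset Printing Implicit Defensive.

Section Alg.
Variable R : realType.

Lemma prod_insub (S : finType) (c : {ffun S -> bool})
  (G : {i : S | ~~ c i} -> R) (C : S -> R) :
  \prod_(i : S) (match (insub i : option {i : S | ~~ c i}) with Some j => G j | None => C i end)
  = (\prod_(j : {i : S | ~~ c i}) G j) * \prod_(i | c i) C i.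
Proof.
rewrite (bigID (fun i => c i)) /= mulrC; congr (_ * _).
  rewrite (reindex_omap (val : {i : S | ~~ c i} -> S) insub); last first.
    by move=> i ci; rewrite insubT.
  apply: eq_big => [j|j _]; first by rewrite (valP j) valK eqxx.
  by rewrite valK.
apply: eq_bigr => i ci.
by rewrite insubF // ci.
Qed.

Lemma sum_insub (S : finType) (I : finType) (c : {ffun S -> bool})
  (F : {i : S | ~~ c i} -> I -> R) (C : S -> R) :
  \sum_(h : {ffun {i : S | ~~ c i} -> I})
     \prod_(i : S) (match (insub i : option {i : S | ~~ c i}) with Some j => F j (h j) | None => C i end)
  = \prod_(i : S) (match (insub i : option {i : S | ~~ c i}) with Some j => \sum_a F j a | None => C i end).
Proof.
rewrite prod_insub.
rewrite (eq_bigr (fun h : {ffun {i : S | ~~ c i} -> I} => (\prod_j F j (h j)) * \prod_(i | c i) C i)); last first.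
  by move=> h _; rewrite (@prod_insub _ c (fun j => F j (h j))).
rewrite -big_distrl /=; congr (_ * _).
by rewrite (bigA_distr_bigA (R:=R)).
Qed.

Variable n : nat.
Local Notation t := (tidx n).
Local Notation pt := 'rV[R]_n.+1.

Lemma sum_dl (F : 'I_n.+1 -> R) a : \sum_b (b == a)%:R * F b = F a.
Proof.
rewrite (bigD1 a) //= eqxx mul1r big1 ?addr0 // => b /negbTE ->; by rewrite mul0r.
Qed.

Lemma sum_dl' (F : 'I_n.+1 -> R) a : \sum_b (a == b)%:R * F b = F a.
Proof. by under eq_bigr do rewrite eq_sym; apply: sum_dl. Qed.

Section Mat.
Variables (J : 'M[R]_n.+1) (Y Xh : pt).
Hypothesis Ju : J \in unitmx.
Hypothesis Jt : forall a, J t a = (a == t)%:R.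
Hypothesis Yt : Y 0 t = 0.
Hypothesis Xrel : forall b, \sum_a J b a * Xh 0 a = Y 0 b + J b t - (b == t)%:R.
Local Notation Ji := (invmx J).

Lemma JiJ a a' : \sum_b Ji a b * J b a' = (a == a')%:R.
Proof. by have := congr1 (fun M : 'M[R]_n.+1 => M a a') (mulVmx Ju); rewrite !mxE. Qed.

Lemma JJi a a' : \sum_b J a b * Ji b a' = (a == a')%:R.
Proof. by have := congr1 (fun M : 'M[R]_n.+1 => M a a') (mulmxV Ju); rewrite !mxE. Qed.

Lemma Jit e : Ji t e = (t == e)%:R.
Proof. by rewrite -JJi; under eq_bigr do rewrite Jt; rewrite sum_dl. Qed.

Lemma Xh_rel a : Xh 0 a = \sum_b Ji a b * Y 0 b + (a == t)%:R - Ji a t.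
Proof.
have : \sum_b Ji a b * (\sum_a' J b a' * Xh 0 a') = \sum_b Ji a b * (Y 0 b + J b t - (b == t)%:R).
  by apply: eq_bigr => b _; rewrite Xrel.
have -> : \sum_b Ji a b * (\sum_a' J b a' * Xh 0 a') = Xh 0 a.
  under eq_bigr do rewrite big_distrr /=.
  rewrite exchange_big /=.
  under eq_bigr => a' _ do (under eq_bigr do rewrite mulrA; rewrite -big_distrl /= JiJ).
  by rewrite sum_dl'.
move=> ->.
under eq_bigr do rewrite mulrBr mulrDr.
rewrite sumrB big_split /= JiJ.
by under [X in _ - X]eq_bigr do rewrite mulrC; rewrite sum_dl.
Qed.

Lemma vecSome e a : \sum_b J e b * ((a != t)%:R * (b == a)%:R)
  = (a != t)%:R * \sum_a' ((a' != t)%:R * (e == a')%:R * J a' a).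
Proof.
have [->|ne] := eqVneq a t.
  by rewrite mul0r big1 // => b _; rewrite mul0r mulr0.
rewrite mul1r.
under eq_bigr do rewrite mul1r mulrC.
rewrite sum_dl.
under eq_bigr do rewrite [X in X * _]mulrC -mulrA.
rewrite sum_dl'.
have [->|nee] := eqVneq e t; last by rewrite mul1r.
by rewrite Jt (negbTE ne) mulr0.
Qed.

Lemma vecNone e : \sum_b J e b * ((b == t)%:R - Xh 0 b) = (e == t)%:R - Y 0 e.
Proof.
under eq_bigr do rewrite mulrBr.
rewrite sumrB Xrel.
under eq_bigr do rewrite mulrC.
rewrite sum_dl; lra.
Qed.

Lemma covNone e : \sum_b Ji b e * (b == t)%:R = (e == t)%:R.
Proof.
under eq_bigr do rewrite mulrC.
by rewrite sum_dl Jit eq_sym.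
Qed.

Lemma covSome e a :
  \sum_b Ji b e * ((a != t)%:R * ((b == a)%:R + (b == t)%:R * Xh 0 a))
  = (a != t)%:R * \sum_a' ((a' != t)%:R * ((e == a')%:R + (e == t)%:R * Y 0 a') * Ji a a').
Proof.
have [->|ne] := eqVneq a t.
  by rewrite mul0r big1 // => b _; rewrite mul0r mulr0.
rewrite mul1r.
under eq_bigr do rewrite mul1r mulrDr mulrA.
rewrite big_split /=.
under eq_bigr do rewrite mulrC.
rewrite sum_dl.
rewrite (eq_bigr (fun i => Xh 0 a * ((i == t)%:R * Ji i e))); last by move=> i _; ring.
rewrite -big_distrr /= sum_dl Jit.
under eq_bigr do rewrite mulrDr mulrDl.
rewrite big_split /=.
rewrite (eq_bigr (fun i => (e == i)%:R * ((i != t)%:R * Ji a i))); last by move=> i _; ring.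
rewrite sum_dl'.
rewrite (eq_bigr (fun i => (e == t)%:R * (Ji a i * Y 0 i))); last first.
  move=> i _; have [->|] := eqVneq i t; first by rewrite Yt; ring.
  by move=> _; rewrite mul1r; ring.
rewrite -big_distrr /=.
have [->|nee] := eqVneq e t.
  rewrite (Xh_rel a) (negbTE ne) /=; ring.
by rewrite /=; ring.
Qed.

Lemma prod_sub1 (S : finType) (c : {ffun S -> bool}) (G : {i : S | ~~ c i} -> R) :
  \prod_j G j = \prod_(i : S) (match (insub i : option {i : S | ~~ c i}) with Some j => G j | None => 1 end).
Proof. by rewrite prod_insub big1_eq mulr1. Qed.

Variables (X1 X2 : pt -> pt) (p1 p2 : pt).
Hypothesis X1E : X1 p1 = Xh.
Hypothesis X2E : X2 p2 = Y.

Lemma per_g (S : finType) (kind : S -> bool) (c : {ffun S -> bool})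
  (f : {ffun {i : S | ~~ c i} -> 'I_n.+1}) (g : {ffun S -> 'I_n.+1}) :
  \prod_i (\sum_b (if kind i then J (g i) b else Ji b (g i)) * dweight kind c X1 p1 f i b)
  = (\prod_j (f j != t)%:R) * \sum_h (\prod_i dweight kind c X2 p2 h i (g i)) *
       \prod_j (if subkind kind c j then J (h j) (f j) else Ji (f j) (h j)).
Proof.
pose Wf (j : {i : S | ~~ c i}) (a : 'I_n.+1) :=
  (if kind (val j) then (a != t)%:R * (g (val j) == a)%:R
   else (a != t)%:R * ((g (val j) == a)%:R + (g (val j) == t)%:R * Y 0 a)) *
  (if kind (val j) then J a (f j) else Ji (f j) a).
pose Cn (i : S) := if kind i then (g i == t)%:R - Y 0 (g i) else (g i == t)%:R.
rewrite (eq_bigr (fun h : {ffun {i : S | ~~ c i} -> 'I_n.+1} =>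
   \prod_(i : S) (match (insub i : option {i : S | ~~ c i}) with Some j => Wf j (h j) | None => Cn i end))); last first.
  move=> h _; rewrite prod_sub1 -big_split /=; apply: eq_bigr => i _.
  rewrite /dweight; case: insubP => [j _ vj|_]; last by rewrite mulr1 X2E.
  by subst i; rewrite /= X2E /subkind /Wf.
rewrite sum_insub prod_sub1 -big_split /=; apply: eq_bigr => i _.
rewrite /dweight; case: insubP => [j _ vj|_]; last first.
  rewrite mul1r /Cn X1E; case: (kind i); first exact: vecNone.
  exact: covNone.
subst i; rewrite /= X1E /Wf; case: (kind (val j)).
  exact: vecSome.
exact: covSome.
Qed.

Lemma alg_main (S : finType) (kind : S -> bool) (c : {ffun S -> bool})
  (Tv : {ffun S -> 'I_n.+1} -> R) (f : {ffun {i : S | ~~ c i} -> 'I_n.+1}) :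
  \sum_(g' : {ffun S -> 'I_n.+1}) (\sum_(g : {ffun S -> 'I_n.+1}) Tv g * \prod_i (if kind i then J (g i) (g' i) else Ji (g' i) (g i)))
     * \prod_i dweight kind c X1 p1 f i (g' i)
  = (\sum_(h : {ffun {i : S | ~~ c i} -> 'I_n.+1}) (\sum_(g : {ffun S -> 'I_n.+1}) Tv g * \prod_i dweight kind c X2 p2 h i (g i))
       * \prod_j (if subkind kind c j then J (h j) (f j) else Ji (f j) (h j)))
    * \prod_j (f j != t)%:R.
Proof.
under [LHS]eq_bigr => g' _ do rewrite big_distrl /=.
rewrite exchange_big /=.
rewrite big_distrl /=.
under [RHS]eq_bigr do rewrite big_distrl /= big_distrl /=.
rewrite [RHS]exchange_big /=.
apply: eq_bigr => g _.
rewrite (eq_bigr (fun g' : {ffun S -> 'I_n.+1} => Tv g * \prod_i ((if kind i then J (g i) (g' i) else Ji (g' i) (g i)) * dweight kind c X1 p1 f i (g' i)))); last first.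
  by move=> g' _; rewrite big_split /= mulrA.
rewrite -big_distrr /=.
rewrite -(bigA_distr_bigA (fun i b => (if kind i then J (g i) b else Ji b (g i)) * dweight kind c X1 p1 f i b)) /=.
rewrite per_g.
rewrite big_distrr /= big_distrr /=.
apply: eq_bigr => h _; ring.
Qed.
End Mat.
End Alg.

Section Ana.
Variable R : realType.
Variable n : nat.
Local Notation t := (tidx n).
Local Notation pt := 'rV[R]_n.+1.

Lemma derive_line (f g : pt -> R) (a v : pt) :
  (\forall h \near (0:R), f (a + h *: v) = g (a + h *: v)) -> 'D_v f a = 'D_v g a.
Proof.
move=> H.
have fa : f a = g a by have := nbhs_singleton H; rewrite scale0r addr0.
have H' : \forall h \near (0:R), h^-1 *: ((f \o shift a) (h *: v) - f a)
                               = h^-1 *: ((g \o shift a) (h *: v) - g a).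
  by move: H; apply: filterS => h /= E; rewrite [h *: v + a]addrC E fa.
rewrite /derive; apply: f_equal; rewrite eqEsubset; split; apply: near_eq_cvg;
  apply: cvg_within; move: H'; apply: filterS => h //.
Qed.

Lemma D_coord (b : 'I_n.+1) (v x : pt) : 'D_v (fun q : pt => q ord0 b) x = v ord0 b.
Proof.
rewrite /derive; apply: lim_near_cst; first exact: norm_hausdorff.
near=> h.
have h0 : h != 0 by near: h; exact: nbhs_dnbhs_neq.
rewrite /= !mxE addrK /GRing.scale /= mulKf //.
Unshelve. all: by end_near.
Qed.


Lemma near_line (A : set pt) (p v : pt) : open A -> A p ->
  \forall h \near (0:R), A (p + h *: v).
Proof.
move=> oA Ap.
have : (fun h : R => p + h *: v) @ (0:R) --> p.
  rewrite -[X in _ --> X]addr0 -(scale0r v).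
  apply: cvgD; first exact: cvg_cst.
  exact: cvgZr_tmp.
by apply; apply: open_nbhs_nbhs; split.
Qed.

Lemma row_decomp (w : pt) : w = \sum_c w ord0 c *: ebasis R c.
Proof.
apply/rowP => j; rewrite summxE (bigD1 j) //= big1 ?addr0.
  by rewrite !mxE !eqxx mulr1.
by move=> c cj; rewrite !mxE eq_sym (negbTE cj) /= mulr0.
Qed.

Lemma diff_row (F : pt -> pt) (x : pt) :
  (forall b, differentiable (fun q => F q ord0 b) x) -> differentiable F x.
Proof.
move=> dF.
have -> : F = \sum_(b < n.+1) (fun q => F q ord0 b *: ebasis R b).
  apply/funext => q; rewrite fct_sumE; exact: row_decomp.
by apply: differentiable_sum => b; apply: differentiableZl.
Qed.

Lemma vsmooth_diff (F : pt -> pt) (A : set pt) : vsmooth A F ->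
  forall x, A x -> differentiable F x.
Proof. by move=> sm x Ax; apply: diff_row => b; exact: ((sm b 1%N).1 x Ax). Qed.

Lemma vsmooth_diffc (F : pt -> pt) (A : set pt) : vsmooth A F ->
  forall x, A x -> forall b, differentiable (fun q => F q ord0 b) x.
Proof. by move=> sm x Ax b; exact: ((sm b 1%N).1 x Ax). Qed.

Lemma dcoord (F : pt -> pt) x v c : differentiable F x ->
  'd (fun q => F q ord0 c) x v = ('d F x v) ord0 c.
Proof.
move=> dF.
have -> : (fun q => F q ord0 c) = (fun N : pt => N ord0 c) \o F by [].
rewrite diff_comp //; last exact: differentiable_coord.
by rewrite /= -deriveE ?D_coord //; exact: differentiable_coord.
Qed.

Lemma jac_D (F : pt -> pt) x a c : differentiable F x ->
  jac F x c a = ('d F x (ebasis R a)) ord0 c.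
Proof.
move=> dF; rewrite /jac mxE /pd deriveE ?dcoord //.
have -> : (fun q => F q ord0 c) = (fun N : pt => N ord0 c) \o F by [].
by apply: differentiable_comp => //; exact: differentiable_coord.
Qed.

Lemma near_open (A : set pt) p : open A -> A p -> \forall q \near p, A q.
Proof. by move=> oA Ap; apply: open_nbhs_nbhs; split. Qed.

Section Diffeo.
Variables (U V : set pt) (Psi Phi : pt -> pt).
Hypotheses (oU : open U) (PsiUV : forall p, U p -> V (Psi p))
  (Psism : vsmooth U Psi) (Phism : vsmooth V Phi)
  (PhiPsi : forall p, U p -> Phi (Psi p) = p).

Lemma jac_mul p : U p -> jac Phi (Psi p) *m jac Psi p = 1%:M.
Proof.
move=> Up.
have dPsi := vsmooth_diff Psism Up.
have dPhi := vsmooth_diff Phism (PsiUV Up).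
apply/matrixP => b a; rewrite !mxE.
have E1 : jac (Phi \o Psi) p b a = (b == a)%:R.
  rewrite /jac mxE /pd.
  rewrite (@near_eq_derive _ _ _ _ (fun N : pt => N ord0 b)) ?D_coord ?mxE ?eqxx //.
  have := near_open oU Up; apply: filterS => q Uq /=.
  by rewrite PhiPsi.
rewrite (jac_D _ _ (differentiable_comp dPsi dPhi)) diff_comp // in E1.
rewrite /= [X in 'd Phi _ X]row_decomp linear_sum /= in E1.
rewrite -E1 summxE; apply: eq_bigr => c _.
rewrite linearZ /= [in RHS]mxE (jac_D _ _ dPsi) mulrC; congr (_ * _).
by rewrite -(jac_D _ _ dPhi) /jac mxE.
Qed.


Lemma jac_unit p : U p -> jac Psi p \in unitmx.
Proof. by move=> Up; have [] := mulmx1_unit (jac_mul Up). Qed.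

Hypothesis ht : forall p, U p -> tcoord (Psi p) = tcoord p.

Lemma jac_t p : U p -> forall a, jac Psi p t a = (a == t)%:R.
Proof.
move=> Up a; rewrite /jac mxE /pd.
rewrite (@near_eq_derive _ _ _ _ (fun N : pt => N ord0 t)) ?D_coord ?mxE ?eqxx 1?eq_sym //.
have := near_open oU Up; apply: filterS => q Uq /=.
exact: ht.
Qed.

End Diffeo.

Definition mk2 (cd : 'I_n.+1 * 'I_n.+1) : {ffun 'I_2 -> 'I_n.+1} :=
  [ffun i : 'I_2 => if i == ord0 then cd.1 else cd.2].

Lemma mk2_bij : bijective mk2.
Proof.
exists (fun gg : {ffun 'I_2 -> 'I_n.+1} => (gg ord0, gg ord_max)).
  by case=> c d; rewrite /mk2 !ffunE /=.
move=> gg; apply/ffunP => i; rewrite /mk2 !ffunE /=.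
by case: i => -[|[|//]] Hi /=; congr (gg _); apply: val_inj.
Qed.

Lemma gmat_pull (Psi : pt -> pt) (g : tfield R n 'I_2) p :
  gmat (pullback vkind2 Psi g) p = (jac Psi p)^T *m gmat g (Psi p) *m jac Psi p.
Proof.
apply/matrixP => a b; rewrite /gmat /pullback mxE.
rewrite (reindex mk2) /=; last by apply: onW_bij; exact: mk2_bij.
rewrite !mxE; under [RHS]eq_bigr do rewrite !mxE big_distrl /=.
rewrite [RHS]exchange_big /= [RHS]pair_bigA /=.
apply: eq_bigr => -[c d] _ /=.
rewrite !big_ord_recl big_ord0 /vkind2 /mk2 !ffunE /= !mxE.
by ring.
Qed.

Definition gf (G : 'M[R]_n.+1) (u v : pt) : R := (u *m G *m v^T) ord0 ord0.

Lemma gfBl G u1 u2 k v : gf G (u1 - k *: u2) v = gf G u1 v - k * gf G u2 v.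
Proof. by rewrite /gf !mulmxBl -!scalemxAl !mxE. Qed.

Lemma gfZ G k u v : gf G (k *: u) (k *: v) = k * k * gf G u v.
Proof.
by rewrite /gf linearZ /= -scalemxAr -!scalemxAl !mxE mulrA.
Qed.

Lemma gf_push G (J : 'M[R]_n.+1) u v :
  gf (J^T *m G *m J) u v = gf G (u *m J^T) (v *m J^T).
Proof. by rewrite /gf trmx_mul trmxK !mulmxA. Qed.

Lemma pushE (J : 'M[R]_n.+1) (u : pt) b : (u *m J^T) ord0 b = \sum_a J b a * u ord0 a.
Proof. by rewrite mxE; apply: eq_bigr => a _; rewrite mxE mulrC. Qed.

Lemma rowDE (A B : pt) b : (A + B) ord0 b = A ord0 b + B ord0 b.
Proof. by rewrite mxE. Qed.
Lemma rowZE k (A : pt) b : (k *: A) ord0 b = k * A ord0 b.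
Proof. by rewrite mxE. Qed.
Lemma ebE a b : (ebasis R a : pt) ord0 b = (b == a)%:R.
Proof. by rewrite mxE eqxx. Qed.

Lemma Xrel_lemma (Psi : pt -> pt) (g : tfield R n 'I_2) p (Xh Y : pt) :
  jac Psi p \in unitmx -> (forall a, jac Psi p t a = (a == t)%:R) ->
  (forall v : pt, v ord0 t = 0 -> v != 0 -> 0 < gform g (Psi p) v v) ->
  is_shift g (Psi p) Y -> is_shift (pullback vkind2 Psi g) p Xh ->
  forall b, \sum_a jac Psi p b a * Xh ord0 a = Y ord0 b + jac Psi p b t - (b == t)%:R.
Proof.
set J := jac Psi p; set G := gmat g (Psi p) => Ju Jt pos.
move=> [Yt [N [nu [nut [nun [nuperp e]]]]]] [Xht [Nh [nuh [nuht [nuhn [nuhperp eh]]]]]].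
have gfh u v : gform (pullback vkind2 Psi g) p u v = gf G (u *m J^T) (v *m J^T).
  by rewrite /gform gmat_pull -gf_push.
have pt0 (u : pt) : (u *m J^T) ord0 t = u ord0 t.
  by rewrite pushE; under eq_bigr do rewrite Jt; rewrite sum_dl.
set w := nuh *m J^T.
have wt : w ord0 t = nuh ord0 t by rewrite pt0.
have gww : gf G w w = -1 by rewrite -gfh.
have wperp : forall s : pt, s ord0 t = 0 -> gf G w s = 0.
  move=> s st; set s' := s *m (invmx J)^T.
  have -> : s = s' *m J^T by rewrite /s' -mulmxA -trmx_mul mulmxV // trmx1 mulmx1.
  rewrite -gfh nuhperp // /s' pushE.
  by under eq_bigr do rewrite (Jit Ju Jt); rewrite sum_dl'.
have nut0 : nu ord0 t != 0 by rewrite gt_eqF.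
have nuperp' : forall s : pt, s ord0 t = 0 -> gf G nu s = 0 := nuperp.
have nun' : gf G nu nu = -1 := nun.
set mu := w ord0 t / nu ord0 t.
have wnu : w = mu *: nu.
  apply/eqP; rewrite -subr_eq0; apply/eqP.
  set sv := w - mu *: nu.
  have svt : sv ord0 t = 0.
    have -> : sv ord0 t = w ord0 t - mu * nu ord0 t by rewrite /sv !mxE.
    by rewrite /mu divfK // subrr.
  apply/eqP; apply: contraT => sv0.
  have := pos _ svt sv0.
  rewrite /gform -/G -/(gf G sv sv) {1}/sv gfBl wperp // nuperp' // mulr0 subrr.
  by rewrite ltxx.
have mu1 : mu = 1.
  have mupos : 0 < mu by rewrite /mu divr_gt0 // wt.
  have : mu * mu * (-1) = -1 by rewrite -{1}nun' -gfZ -wnu.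
  rewrite mulrN1 => /eqP; rewrite eqr_opp -expr2 sqrf_eq1 => /orP[/eqP //|/eqP m1].
  by move: mupos; rewrite m1 ltr0N1.
rewrite mu1 scale1r in wnu.
have eh' := congr1 (fun u : pt => u *m J^T) eh; rewrite /= mulmxDl -scalemxAl -/w wnu in eh'.
have Nhe : Nh = N.
  have h1 := congr1 (fun u : pt => u ord0 t) eh'; have h2 := congr1 (fun u : pt => u ord0 t) e.
  rewrite pt0 rowDE pt0 Xht addr0 rowZE in h1.
  rewrite rowDE Yt addr0 rowZE in h2.
  by apply: (mulIf nut0); rewrite -h1 -h2.
move=> b.
have h1 := congr1 (fun u : pt => u ord0 b) eh'; have h2 := congr1 (fun u : pt => u ord0 b) e.
rewrite /= rowDE rowZE !pushE Nhe in h1.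
rewrite /= rowDE rowZE ebE in h2.
have e1 : \sum_a J b a * (ebasis R t : pt) ord0 a = J b t.
  by under eq_bigr do rewrite ebE mulrC; rewrite sum_dl.
rewrite e1 in h1; lra.
Qed.
End Ana.

Section Slice.
Variable R : realType.
Variable n : nat.
Local Notation t := (tidx n).
Local Notation pt := 'rV[R]_n.+1.

Lemma tcoord_line (q : pt) h c : c != t -> tcoord (q + h *: ebasis R c) = tcoord q.
Proof. by move=> ct; rewrite /tcoord rowDE rowZE ebE eq_sym (negbTE ct) mulr0 addr0. Qed.

Lemma decomp_spatial (S : finType) (kind : S -> bool) (T : tfield R n S) (X : pt -> pt)
  (c : {ffun S -> bool}) q (h : {ffun {i : S | ~~ c i} -> 'I_n.+1}) j :
  h j = t -> decomp kind T X c q h = 0.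
Proof.
move=> hj; rewrite /decomp big1 // => g _.
rewrite (bigD1 (val j)) //= /dweight valK /= hj eqxx.
by case: (kind _); rewrite !mul0r mulr0.
Qed.

Variables (U : set pt) (Psi : pt -> pt) (t0 : R).
Hypotheses (oU : open U) (hid : forall p, U p -> tcoord p = t0 -> Psi p = p).

Lemma jac_slice q : U q -> tcoord q = t0 -> forall b a, a != t -> jac Psi q b a = (b == a)%:R.
Proof.
move=> Uq tq b a at'; rewrite /jac mxE /pd.
rewrite (@derive_line _ _ _ (fun N : pt => N ord0 b)) ?D_coord ?ebE //.
have := near_line (ebasis R a) oU Uq; apply: filterS => h Uh.
by rewrite hid // tcoord_line.
Qed.

Lemma Ji_slice q : U q -> tcoord q = t0 -> jac Psi q \in unitmx ->
  forall a e, e != t -> invmx (jac Psi q) a e = (a == e)%:R.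
Proof.
move=> Uq tq Ju a e et.
rewrite -(JiJ Ju); under eq_bigr do rewrite (jac_slice Uq tq _ et) mulrC.
by rewrite sum_dl.
Qed.
End Slice.
Unset Implicit Arguments.

Theorem lemma5p1 (R : realType) (n : nat) (Sigma : set 'rV[R]_n) (a b : \bar R)
  (U V : set 'rV[R]_n.+1) (Psi : 'rV[R]_n.+1 -> 'rV[R]_n.+1)
  (g : tfield R n 'I_2) (X Xhat : 'rV[R]_n.+1 -> 'rV[R]_n.+1)
  (k : nat) (kind : 'I_k -> bool) (T : tfield R n 'I_k) :
  open Sigma -> (a < b)%E ->
  open U -> open V -> U `<=` Mset Sigma a b -> V `<=` Mset Sigma a b ->
  diffeo U V Psi -> (forall p, U p -> tcoord (Psi p) = tcoord p) ->
  slice_compatible V g ->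
  (forall p, V p -> is_shift g p (X p)) ->
  (forall p, U p -> is_shift (pullback vkind2 Psi g) p (Xhat p)) ->
  tsmooth V T ->
  (forall c p f, U p ->
     decomp kind (pullback kind Psi T) Xhat c p f
     = jstar (pullback (subkind kind c) Psi (decomp kind T X c)) p f) /\
  (forall t0 : R, (forall p, U p -> tcoord p = t0 -> Psi p = p) ->
     forall p, U p -> tcoord p = t0 ->
       (forall c f, decomp kind (pullback kind Psi T) Xhat c p f
                    = decomp kind T X c p f) /\
       (forall S : 'rV[R]_n.+1 -> 'rV[R]_n.+1,
          vsmooth U S -> (forall q, U q -> S q ord0 (tidx n) = 0) ->
          forall c f,
            lie (subkind kind c) S (decomp kind (pullback kind Psi T) Xhat c) p f
            = lie (subkind kind c) S (decomp kind T X c) p f)).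
Proof.
move=> _ _ oU oV _ _ [PsiUV [Psism [Phi [PhiVU [Phism [PhiPsi PsiPhi]]]]]] ht
  [gsm gpos] hX hXh hT.
have part1 : forall c p f, U p ->
     decomp kind (pullback kind Psi T) Xhat c p f
     = jstar (pullback (subkind kind c) Psi (decomp kind T X c)) p f.
  move=> c p f Up.
  have Ju := jac_unit oU PsiUV Psism Phism PhiPsi Up.
  have Jt := jac_t oU ht Up.
  have Vq := PsiUV p Up.
  have [Yt _] := hX _ Vq.
  have Xr := Xrel_lemma Ju Jt (gpos _ Vq).2 (hX _ Vq) (hXh _ Up).
  rewrite /decomp /jstar /pullback.
  exact: (alg_main Ju Jt Yt Xr (X1:=Xhat) (p1:=p) (X2:=X) (p2:=Psi p) erefl erefl).
split; first exact: part1.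
move=> t0 hid.
have slice : forall q, U q -> tcoord q = t0 -> forall c f,
    decomp kind (pullback kind Psi T) Xhat c q f = decomp kind T X c q f.
  move=> q Uq tq c f.
  have Ju := jac_unit oU PsiUV Psism Phism PhiPsi Uq.
  rewrite part1 // /jstar /pullback (hid q Uq tq).
  case: (boolP [forall j, f j != tidx n]) => [/forallP allf | /forallPn [j /negPn /eqP fj]]; last first.
    rewrite (decomp_spatial _ _ _ _ fj) (bigD1 j) //= fj eqxx /=.
    by rewrite !mul0r mulr0.
  have -> : \prod_j (f j != tidx n)%:R = 1 :> R by rewrite big1 // => j _; rewrite allf.
  rewrite mulr1.
  rewrite (bigD1 f) //= [X in _ + X]big1 ?addr0.
    rewrite big1 ?mulr1 // => j _; case: (subkind _ _ _).
      by rewrite (jac_slice oU hid Uq tq _ (allf j)) eqxx.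
    by rewrite (Ji_slice oU hid Uq tq Ju _ (allf j)) eqxx.
  move=> h hf.
  case: (pickP (fun j => h j != f j)) => [j hj|none]; last first.
    by exfalso; move/eqP: hf; apply; apply/ffunP => j; apply/eqP; have := none j => /negbT/negPn.
  have [htj|htj] := eqVneq (h j) (tidx n).
    by rewrite (decomp_spatial _ _ _ _ htj) mul0r.
  rewrite (bigD1 j) //=; case: (subkind _ _ _).
    by rewrite (jac_slice oU hid Uq tq _ (allf j)) (negbTE hj) mul0r mulr0.
  by rewrite (Ji_slice oU hid Uq tq Ju _ htj) eq_sym (negbTE hj) mul0r mulr0.
move=> p Up tp; split; first exact: slice.
move=> S _ hS c f; rewrite /lie; congr (_ + _).
  apply: eq_bigr => c' _.
  have [->|ct] := eqVneq c' (tidx n); first by rewrite hS // !mul0r.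
  congr (_ * _); apply: derive_line.
  have := near_line (ebasis R c') oU Up; apply: filterS => h Uh.
  by rewrite slice // tcoord_line.
apply: eq_bigr => i _; apply: eq_bigr => c' _.
by rewrite slice.
Qed.
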